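(* Let $Q=\langle b\rangle\ltimes_{(g,\gamma)}X$. Then $$1\times\langle\mathrm{Img}(\gamma)\rangle=A(Q)\le C(Q)=Q'=1\times\langle\mathrm{Img}(\gamma)\cup\mathrm{Img}(1-g)\rangle,$$ where $\langle S\rangle$ denotes the subgroup of $(X,+)$ generated by $S$ and $\mathrm{Img}(1-g)=\{x-g(x):x\in X\}$.
   Context: Let $(X,+)$ be an abelian group and $(g,\gamma)$ a construction pair on it: $g$ a permutation of $X$, $\gamma:X\times X\to X$ symmetric, alternating, biadditive, with (C1) $g^{-1}(g(x)+g(y))=x+y+\gamma(x,y)+g^{-1}(\gamma(x,y))+g^{-2}(\gamma(x,y))$, (C2) $\gamma(\gamma(x,y),z)=0$, (C3) $g^{-1}(\gamma(x,y))=\gamma(g(x),y)$ for all $x,y,z$. Let $\mathrm{Rad}(\gamma)=\{x:\gamma(x,y)=0\ \forall y\}$, $\mathrm{Img}(\gamma)$ the image of $\gamma$, and $r(g,\gamma)$ the least positive $r$ with $\sum_{0\le k<r}g^k(x)\in\mathrm{Rad}(\gamma)$ for all $x$ ($\infty$ if none). $I(i,j)$ is $\emptyset$ if $i=j$, $\{i,\dots,j-1\}$ if $i<j$, $\{j,\dots,i-1\}$ if $j<i$. For a cyclic group $C=\langle b\rangle$ such that (if finite) $|g|$ and $r(g,\gamma)$ divide $|C|$, $C\ltimes_{(g,\gamma)}X$ is the Moufang loop on $C\times X$ with multiplication $(b^i,x)(b^j,y)=(b^{i+j},g^{-j}(x)+y+\sum_{k\in I(i+j,-j)}g^{-k}(\gamma(x,y)))$.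 For a loop $Q$, the commutator subloop $C(Q)$ (resp. associator subloop $A(Q)$, resp. derived subloop $Q'$) is the smallest normal subloop $N$ such that $Q/N$ is commutative (resp. a group, resp. an abelian group). *)

(* Defs.v *)
From mathcomp Require Import all_boot all_order all_algebra.
Set Implicit Arguments. Unset Strict Implicit. Unset Printing Implicit Defensive.
Import Order.TTheory GRing.Theory Num.Theory.
Local Open Scope ring_scope.

Section LoopNotions.
Variables (T : Type) (mul : T -> T -> T) (e : T).

Definition set_eq (A B : T -> Prop) := forall z, A z <-> B z.
Definition set_sub (A B : T -> Prop) := forall z, A z -> B z.

Definition lcoset (x : T) (N : T -> Prop) : T -> Prop :=
  fun z => exists a, N a /\ z = mul x a.
Definition rcoset (N : T -> Prop) (x : T) : T -> Prop :=
  fun z => exists a, N a /\ z = mul a x.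
Definition rrcoset (N : T -> Prop) (x y : T) : T -> Prop :=
  fun z => exists a, N a /\ z = mul (mul a x) y.
Definition llcoset (y x : T) (N : T -> Prop) : T -> Prop :=
  fun z => exists a, N a /\ z = mul y (mul x a).

Definition subloop (N : T -> Prop) : Prop :=
  [/\ N e,
      (forall a b, N a -> N b -> N (mul a b)),
      (forall a b x, N a -> N b -> mul a x = b -> N x) &
      (forall a b x, N a -> N b -> mul x a = b -> N x)].

Definition normal_subloop (N : T -> Prop) : Prop :=
  subloop N /\
  forall x y, [/\ set_eq (lcoset x N) (rcoset N x),
                  set_eq (rrcoset N x y) (rcoset N (mul x y)) &
                  set_eq (llcoset y x N) (lcoset (mul y x) N)].

(* Properties of the quotient loop Q/N, whose elements are the cosets xN
   with (xN)(yN) = (xy)N. *)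
Definition quot_commutative (N : T -> Prop) : Prop :=
  forall x y, set_eq (lcoset (mul x y) N) (lcoset (mul y x) N).
Definition quot_associative (N : T -> Prop) : Prop :=
  forall x y z, set_eq (lcoset (mul (mul x y) z) N) (lcoset (mul x (mul y z)) N).
(* a loop is a group iff it is associative *)
Definition quot_group (N : T -> Prop) : Prop := quot_associative N.
Definition quot_abelian_group (N : T -> Prop) : Prop :=
  quot_associative N /\ quot_commutative N.

Definition smallest_normal (P : (T -> Prop) -> Prop) (N : T -> Prop) : Prop :=
  [/\ normal_subloop N, P N &
      forall M, normal_subloop M -> P M -> set_sub N M].

Definition is_commutator_subloop := smallest_normal quot_commutative.
Definition is_associator_subloop := smallest_normal quot_group.
Definition is_derived_subloop := smallest_normal quot_abelian_group.
End LoopNotions.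

Section Construction.
Variable X : zmodType.

Definition gpow (g ginv : X -> X) (k : int) : X -> X :=
  match k with
  | Posz m => iter m g
  | Negz m => iter m.+1 ginv
  end.

Definition Irange (i j : int) : seq int :=
  [seq Num.min i j + (k%:Z) | k <- iota 0 `|i - j|%N].

Definition Rad (gam : X -> X -> X) (x : X) : Prop := forall y, gam x y = 0.

Definition add_subgroup (H : X -> Prop) : Prop :=
  [/\ H 0, (forall a b, H a -> H b -> H (a + b)) & (forall a, H a -> H (- a))].
Definition gen_subgroup (S : X -> Prop) (x : X) : Prop :=
  forall H, add_subgroup H -> (forall s, S s -> H s) -> H x.

Definition Img_gam (gam : X -> X -> X) (z : X) : Prop := exists x y, z = gam x y.
Definition Img_1mg (g : X -> X) (z : X) : Prop := exists x, z = x - g x.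

Definition order_divides (g : X -> X) (n : nat) : Prop :=
  exists m : nat, [/\ (0 < m)%N, (forall x, iter m g x = x),
                     (forall k, (0 < k < m)%N -> ~ (forall x, iter k g x = x)) &
                     (m %| n)%N].

Definition r_prop (g : X -> X) (gam : X -> X -> X) (r : nat) : Prop :=
  forall x, Rad gam (\sum_(k < r) iter k g x).

Definition r_divides (g : X -> X) (gam : X -> X -> X) (n : nat) : Prop :=
  exists r : nat, [/\ (0 < r)%N, r_prop g gam r,
                     (forall k, (0 < k < r)%N -> ~ r_prop g gam k) &
                     (r %| n)%N].

(* the cyclic group C = <b> of order n (n = 0 : infinite cyclic);
   b^i is represented by the integer i with i = i mod n *)
Definition Cyc (n : nat) := {i : int | intdiv.modz i n == i}.

Lemma Cyc_modP (n : nat) (i : int) : intdiv.modz (intdiv.modz i n) n == intdiv.modz i n.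
Proof. by apply/eqP; rewrite modz_mod. Qed.

Definition cyc_of (n : nat) (i : int) : Cyc n := exist _ (intdiv.modz i n) (Cyc_modP n i).

Definition sdmul (g ginv : X -> X) (gam : X -> X -> X) (n : nat)
    (p q : Cyc n * X) : Cyc n * X :=
  let i := sval p.1 in let x := p.2 in
  let j := sval q.1 in let y := q.2 in
  (cyc_of n (i + j),
   gpow g ginv (- j) x + y +
   \sum_(k <- Irange (i + j) (- j)) gpow g ginv (- k) (gam x y)).

Definition sdone (n : nat) : Cyc n * X := (cyc_of n 0, 0).

Definition one_times (n : nat) (S : X -> Prop) (p : Cyc n * X) : Prop :=
  sval p.1 = 0 /\ gen_subgroup S p.2.
End Construction.

(* Main.v *)
Require Import Defs.
From mathcomp Require Import all_boot all_order all_algebra.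
Import GRing.Theory.
Local Open Scope ring_scope.
Set Implicit Arguments. Unset Strict Implicit.

Ltac canc t := rewrite ?[t + _]addrC; repeat rewrite [_ + t + _]addrAC;
   rewrite ?[(- t) + _]addrC; repeat rewrite [_ + (- t) + _]addrAC;
   first [rewrite addrK | rewrite subrr].
Ltac zprep := apply/eqP; rewrite -subr_eq0 ?opprD ?opprK ?addrA.

Section Basic.
Variables (X : zmodType) (g ginv : X -> X) (gam : X -> X -> X).
Hypotheses (g_ginv : cancel g ginv) (ginv_g : cancel ginv g)
  (gam_sym : forall x y, gam x y = gam y x)
  (gam_alt : forall x, gam x x = 0)
  (gam_addl : forall x y z, gam (x + y) z = gam x z + gam y z)
  (gam_addr : forall x y z, gam x (y + z) = gam x y + gam x z)
  (C1 : forall x y, ginv (g x + g y)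
          = x + y + gam x y + ginv (gam x y) + ginv (ginv (gam x y)))
  (C2 : forall x y z, gam (gam x y) z = 0)
  (C3 : forall x y, ginv (gam x y) = gam (g x) y).

Lemma gam0r x : gam x 0 = 0.
Proof. have h := gam_addr x 0 0; rewrite addr0 in h; apply: (addrI (gam x 0)); by rewrite -h addr0. Qed.
Lemma gam0l x : gam 0 x = 0.
Proof. by rewrite gam_sym gam0r. Qed.
Lemma gamNr x y : gam x (- y) = - gam x y.
Proof. by apply/eqP; rewrite -addr_eq0 -gam_addr addNr gam0r. Qed.
Lemma gamNl x y : gam (- x) y = - gam x y.
Proof. by rewrite gam_sym gamNr gam_sym. Qed.
Lemma gamBr x y z : gam x (y - z) = gam x y - gam x z.
Proof. by rewrite gam_addr gamNr. Qed.
Lemma gamBl x y z : gam (x - y) z = gam x z - gam y z.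
Proof. by rewrite gam_addl gamNl. Qed.

Lemma solve3 (a b c : X) : b = (a + b + c) - c - a.
Proof. by rewrite addrK [a + b]addrC addrK. Qed.

Lemma ginv0 : ginv 0 = 0.
Proof. by rewrite -(gam0r 0) C3 gam0r. Qed.
Lemma g0 : g 0 = 0.
Proof. by rewrite -{1}ginv0 ginv_g. Qed.

Lemma gen_sub (S : X -> Prop) : add_subgroup (gen_subgroup S).
Proof.
rewrite /add_subgroup /gen_subgroup; split.
- by move=> H [H0 _ _] _.
- by move=> a b Ha Hb H HH HS; case: (HH) => _ Hadd _; apply: Hadd; [apply: Ha|apply: Hb].
- by move=> a Ha H HH HS; case: (HH) => _ _ Hopp; apply: Hopp; apply: Ha.
Qed.
Lemma gen_in (S : X -> Prop) s : S s -> gen_subgroup S s.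
Proof. by move=> Ss H _ HS; apply: HS. Qed.
Lemma gen_min (S H : X -> Prop) : add_subgroup H -> (forall s, S s -> H s) ->
  forall x, gen_subgroup S x -> H x.
Proof. by move=> HH HS x Hx; apply: Hx. Qed.

Lemma sub_B (H : X -> Prop) : add_subgroup H -> forall a b, H a -> H b -> H (a - b).
Proof. by rewrite /add_subgroup; case=> _ Hadd Hopp a b Ha Hb; apply: Hadd => //; apply: Hopp. Qed.

Definition G0 := gen_subgroup (Img_gam gam).

Lemma G0sub : add_subgroup G0. Proof. exact: gen_sub. Qed.
Lemma G0_0 : G0 0. Proof. by case: G0sub. Qed.
Lemma G0_add a b : G0 a -> G0 b -> G0 (a + b). Proof. by case: G0sub => _ h _; apply: h. Qed.
Lemma G0_opp a : G0 a -> G0 (- a). Proof. by case: G0sub => _ _ h; apply: h. Qed.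
Lemma G0_sub a b : G0 a -> G0 b -> G0 (a - b). Proof. by move=> ? ?; apply: G0_add => //; apply: G0_opp. Qed.
Lemma G0_gam a b : G0 (gam a b). Proof. by apply: gen_in; exists a, b. Qed.

Lemma G0_rad z : G0 z -> forall a, gam a z = 0.
Proof.
move=> Gz a; move: z Gz; apply: gen_min.
- split; first by rewrite gam0r.
  + by move=> x y hx hy; rewrite gam_addr hx hy addr0.
  + by move=> x hx; rewrite gamNr hx oppr0.
- by move=> s [x [y ->]]; rewrite gam_sym C2.
Qed.
Lemma G0_radl z : G0 z -> forall a, gam z a = 0.
Proof. by move=> Gz a; rewrite gam_sym G0_rad. Qed.

Lemma g_gam x y : g (gam x y) = gam (ginv x) y.
Proof. by rewrite -{1}(ginv_g x) -C3 ginv_g. Qed.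

Lemma ginvD u v : exists c, G0 c /\ ginv (u + v) = ginv u + ginv v + c.
Proof.
exists (gam (ginv u) (ginv v) + ginv (gam (ginv u) (ginv v)) + ginv (ginv (gam (ginv u) (ginv v)))).
split.
- by rewrite !C3; apply: G0_add; [apply: G0_add|]; apply: G0_gam.
- by rewrite -{1}(ginv_g u) -{1}(ginv_g v) C1 !addrA.
Qed.

Lemma G0_ginv c : G0 c -> G0 (ginv c).
Proof.
move: c; apply: gen_min.
- split; first by rewrite ginv0; apply: G0_0.
  + move=> a b ha hb; have [c [Gc ->]] := ginvD a b.
    by apply: G0_add => //; apply: G0_add.
  + move=> a ha; have [c [Gc E]] := ginvD a (- a).
    rewrite subrr ginv0 in E; rewrite (solve3 (ginv a) (ginv (-a)) c) -E.
    by apply: G0_sub; [apply: G0_sub => //; apply: G0_0|].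
- by move=> s [x [y ->]]; rewrite C3; apply: G0_gam.
Qed.

Lemma gDG0 u c : G0 c -> g (u + c) = g u + g c.
Proof.
move=> Gc; apply: (can_inj ginv_g); rewrite g_ginv C1 (G0_rad Gc) ginv0 ginv0.
by rewrite !addr0.
Qed.

Lemma G0_g c : G0 c -> G0 (g c).
Proof.
move=> Gc; suff: G0 c /\ G0 (g c) by case.
move: c Gc; apply: gen_min.
- split; first by split; [apply: G0_0|rewrite g0; apply: G0_0].
  + move=> a b [ha ha'] [hb hb']; split; first by apply: G0_add.
    by rewrite gDG0 //; apply: G0_add.
  + move=> a [ha ha']; split; first by apply: G0_opp.
    have E := gDG0 a (G0_opp ha).
    rewrite subrr g0 in E.
    have -> : g (- a) = - g a by apply/eqP; rewrite -addr_eq0 addrC -E.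
    by apply: G0_opp.
- by move=> s [x [y ->]]; split; [apply: G0_gam|rewrite g_gam; apply: G0_gam].
Qed.

Lemma ginvDG0 u c : G0 c -> ginv (u + c) = ginv u + ginv c.
Proof.
move=> Gc; rewrite -{1}(ginv_g u) -{1}(ginv_g c) C1 (G0_rad (G0_ginv Gc)) ginv0 ginv0.
by rewrite !addr0.
Qed.

Lemma gD u v : exists c, G0 c /\ g (u + v) = g u + g v + c.
Proof.
have [c [Gc E]] := ginvD (g u) (g v).
rewrite !g_ginv in E.
exists (- g c); split; first by apply: G0_opp; apply: G0_g.
have : g (ginv (g u + g v)) = g (u + v + c) by rewrite E.
rewrite ginv_g gDG0 // => ->.
by rewrite addrK.
Qed.

Lemma iter_can (f h : X -> X) : cancel f h -> forall m x, iter m h (iter m f x) = x.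
Proof. by move=> fh; elim=> [|m IH] x //; rewrite [iter m.+1 f x]iterS iterSr fh IH. Qed.

Lemma gpowN_swap (f h : X -> X) z x : gpow f h (- z) x = gpow h f z x.
Proof. by case: z => [[|m]|m]. Qed.

Lemma gpowN (f h : X -> X) m x : gpow f h (- (Posz m)) x = iter m h x.
Proof. by case: m. Qed.

Lemma keyG (f h : X -> X) : cancel f h -> cancel h f -> forall m p x,
  gpow f h (Posz m - Posz p) x = iter m f (iter p h x).
Proof.
move=> fh hf m p x; case: (leqP p m) => hpm.
- rewrite -(subnK hpm) PoszD addrK ssrnat.iterD iter_can //.
- have hmp : (m <= p)%N by apply: ltnW.
  rewrite -(subnKC hmp) PoszD opprD addrA subrr add0r gpowN ssrnat.iterD.
  by rewrite iter_can.
Qed.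

Lemma gpow_add a b x : gpow g ginv (a + b) x = gpow g ginv a (gpow g ginv b x).
Proof.
case: a => [m|m]; case: b => [p|p]; rewrite ?NegzE.
- by rewrite -PoszD /= ssrnat.iterD.
- by rewrite keyG // gpowN.
- rewrite -[- (Posz m.+1) + Posz p]opprK opprD opprK (gpowN_swap g ginv (Posz m.+1 - Posz p)) keyG //.
- by rewrite -opprD -PoszD !gpowN ssrnat.iterD.
Qed.

Lemma gpow_can k x : gpow g ginv (- k) (gpow g ginv k x) = x.
Proof. by rewrite -gpow_add addNr. Qed.

Lemma gpow_mulz (n : nat) : (forall x, iter n g x = x) ->
  forall (z : int) x, gpow g ginv (z * n) x = x.
Proof.
move=> hn.
have hn' : forall x, iter n ginv x = x by move=> x; rewrite -{1}(hn x) iter_can.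
have it : forall (f : X -> X), (forall x, iter n f x = x) -> forall q x, iter (q * n) f x = x.
  by move=> f hf; elim=> [|q IH] x //; rewrite mulSn ssrnat.iterD IH hf.
case=> [q|q] x; first by rewrite -PoszM /= it.
by rewrite NegzE mulNr -PoszM gpowN it.
Qed.

Lemma gpow_mod (n : nat) : ((0 < n)%N -> forall x, iter n g x = x) ->
  forall j k x, gpow g ginv (- k) (gpow g ginv (- j) x)
               = gpow g ginv (- intdiv.modz (j + k) n) x.
Proof.
move=> hn j k x; rewrite -gpow_add -opprD [k + j]addrC.
case: (posnP n) => [->|np]; first by rewrite intdiv.modz0.
rewrite {1}(intdiv.divz_eq (j + k) n) opprD addrC gpow_add -mulNr.
by rewrite gpow_mulz //; apply: hn.
Qed.

Section WithH.
Variable H : X -> Prop.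
Hypotheses (Hsub : add_subgroup H) (HG0 : forall c, G0 c -> H c)
  (Hg : forall c, H c -> H (g c)) (Hginv : forall c, H c -> H (ginv c)).

Lemma H0 : H 0. Proof. by case: Hsub. Qed.
Lemma Hadd a b : H a -> H b -> H (a + b). Proof. by case: Hsub => _ h _; apply: h. Qed.
Lemma Hopp a : H a -> H (- a). Proof. by case: Hsub => _ _ h; apply: h. Qed.
Lemma Hsubr a b : H a -> H b -> H (a - b). Proof. by move=> ? ?; apply: Hadd => //; apply: Hopp. Qed.

Definition good (f : X -> X) :=
  [/\ forall u c, G0 c -> f (u + c) = f u + f c,
      forall c, G0 c -> G0 (f c),
      forall c, H c -> H (f c),
      forall u v, G0 (f (u + v) - f u - f v) &
      f 0 = 0].

Lemma decomp3 (a b c : X) : a = b + c + (a - b - c).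
Proof. by rewrite addrC -[a - b - c]addrA -opprD subrK. Qed.

Lemma sub3 (a b c : X) : a + b + c - a - b = c.
Proof. by rewrite -[a + b + c]addrA [a + (b + c) - a]addrC addKr [b + c]addrC addrK. Qed.

Lemma good_g : good g.
Proof.
split.
- exact: gDG0.
- exact: G0_g.
- exact: Hg.
- move=> u v; have [c [Gc ->]] := gD u v.
  by rewrite sub3.
- exact: g0.
Qed.

Lemma good_ginv : good ginv.
Proof.
split.
- exact: ginvDG0.
- exact: G0_ginv.
- exact: Hginv.
- move=> u v; have [c [Gc ->]] := ginvD u v.
  by rewrite sub3.
- exact: ginv0.
Qed.

Lemma good_iter f : good f -> forall m, good (iter m f).
Proof.
case=> f1 f2 f3 f4 f5; elim=> [|m [i1 i2 i3 i4 i5]].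
  split=> //=; move=> u v; rewrite [u + v]addrC addrK subrr; exact: G0_0.
split=> /=.
- by move=> u c Gc; rewrite i1 // f1 //; apply: i2.
- by move=> c Gc; apply: f2; apply: i2.
- by move=> c Hc; apply: f3; apply: i3.
- move=> u v.
  set A := iter m f u; set B := iter m f v; set W := iter m f (u + v).
  have -> : W = A + B + (W - A - B) by apply: decomp3.
  rewrite f1; last by apply: i4.
  set F := f (A + B).
  have -> : F = f A + f B + (F - f A - f B) by apply: decomp3.
  rewrite -[_ + _ + (F - _ - _) + _]addrA sub3.
  by apply: G0_add; [rewrite /F; apply: f4|apply: f2; rewrite /W /A /B; apply: i4].
- by rewrite /= i5 f5.
Qed.

Lemma good_gpow k : good (gpow g ginv k).
Proof. by case: k => m; apply: good_iter; [apply: good_g|apply: good_ginv]. Qed.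

Lemma good_H f : good f -> forall a b, H (a - b) -> H (f a - f b).
Proof.
case=> f1 f2 f3 f4 f5 a b hab.
have E : f a - f b = (f (b + (a - b)) - f b - f (a - b)) + f (a - b).
  by rewrite subrK [b + (a - b)]addrC subrK.
by rewrite E; apply: Hadd; [apply: HG0; apply: f4|apply: f3].
Qed.

End WithH.

Lemma gpG0 k : good G0 (gpow g ginv k).
Proof. exact: (good_gpow G0_g G0_ginv k). Qed.

Lemma gp_addG0 k u c : G0 c -> gpow g ginv k (u + c) = gpow g ginv k u + gpow g ginv k c.
Proof. by case: (gpG0 k) => h _ _ _ _; apply: h. Qed.
Lemma gp_G0 k c : G0 c -> G0 (gpow g ginv k c).
Proof. by case: (gpG0 k) => _ h _ _ _; apply: h. Qed.
Lemma gp_D k u v : G0 (gpow g ginv k (u + v) - gpow g ginv k u - gpow g ginv k v).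
Proof. by case: (gpG0 k) => _ _ _ h _; apply: h. Qed.
Lemma gp_0 k : gpow g ginv k 0 = 0.
Proof. by case: (gpG0 k) => _ _ _ _ h; apply: h. Qed.

Lemma eq3 (a b c a' b' c' : X) : (a + b + c) - (a' + b' + c') = (a - a') + (b - b') + (c - c').
Proof. by rewrite !opprD addrACA [(a + b) + _]addrACA. Qed.

Definition Tg (s : seq int) a b := \sum_(k <- s) gpow g ginv (- k) (gam a b).

Lemma Tg_G0 s a b : G0 (Tg s a b).
Proof.
rewrite /Tg; elim: s => [|k s IH]; first by rewrite big_nil; apply: G0_0.
by rewrite big_cons; apply: G0_add => //; apply: gp_G0; apply: G0_gam.
Qed.

Lemma Tg_addr s a b1 b2 : Tg s a (b1 + b2) = Tg s a b1 + Tg s a b2.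
Proof.
rewrite /Tg; elim: s => [|k s IH]; first by rewrite !big_nil addr0.
rewrite !big_cons IH gam_addr gp_addG0; last by apply: G0_gam.
by rewrite addrACA.
Qed.

Lemma Tg_G0r s a b : G0 b -> Tg s a b = 0.
Proof.
move=> Gb; rewrite /Tg; elim: s => [|k s IH]; first by rewrite big_nil.
by rewrite big_cons IH (G0_rad Gb) gp_0 addr0.
Qed.

Lemma Tg_G0l s a b : G0 a -> Tg s a b = 0.
Proof.
move=> Ga; rewrite /Tg; elim: s => [|k s IH]; first by rewrite big_nil.
by rewrite big_cons IH (G0_radl Ga) gp_0 addr0.
Qed.

Lemma Tg_addl s a1 a2 b : Tg s (a1 + a2) b = Tg s a1 b + Tg s a2 b.
Proof.
rewrite /Tg; elim: s => [|k s IH]; first by rewrite !big_nil addr0.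
rewrite !big_cons IH gam_addl gp_addG0; last by apply: G0_gam.
by rewrite addrACA.
Qed.

Lemma Tg_eql s a1 a2 b : G0 (a1 - a2) -> Tg s a1 b = Tg s a2 b.
Proof.
move=> h; rewrite -[a1](subrK a2) Tg_addl (Tg_G0l _ _ h) add0r //.
Qed.

Lemma Tg_eqr s a b1 b2 : G0 (b1 - b2) -> Tg s a b1 = Tg s a b2.
Proof.
move=> h; rewrite -[b1](subrK b2) Tg_addr (Tg_G0r _ _ h) add0r //.
Qed.

Lemma Tg_alt s a : Tg s a a = 0.
Proof.
rewrite /Tg; elim: s => [|k s IH]; first by rewrite big_nil.
by rewrite big_cons IH gam_alt gp_0 addr0.
Qed.

Lemma Tg_oppr s a b : Tg s a (- b) = - Tg s a b.
Proof.
apply/eqP; rewrite -addr_eq0 -Tg_addr addNr Tg_G0r //; apply: G0_0.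
Qed.

Lemma eqA (z y d A t : X) : z - y - d - A = (z - (A + y + t)) + (t - d).
Proof. by rewrite !opprD !addrA subrK [LHS]addrAC [z - y - A]addrAC. Qed.
Lemma eqB (y A d : X) : A - y - d + y + d = A.
Proof. by rewrite addrAC subrK subrK. Qed.

Section Loop.
Variable n : nat.
Variable H : X -> Prop.
Hypotheses (Hsub : add_subgroup H) (HG0 : forall c, G0 c -> H c)
  (Hg : forall c, H c -> H (g c)) (Hginv : forall c, H c -> H (ginv c)).

Local Notation mul := (sdmul g ginv gam (n:=n)).
Local Notation gp := (gpow g ginv).

Definition Crel (q z : Cyc n * X) := sval z.1 = sval q.1 /\ H (z.2 - q.2).

Lemma cyc_inj (c1 c2 : Cyc n) : sval c1 = sval c2 -> c1 = c2.
Proof. exact: val_inj. Qed.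

Lemma cycK (c : Cyc n) : cyc_of n (sval c) = c.
Proof. by apply: val_inj; apply/eqP; apply: (svalP c). Qed.

Lemma cyc_add0 (c k : Cyc n) : sval (cyc_of n (sval c + sval k)) = sval c -> sval k = 0.
Proof.
move=> /= h; rewrite -(eqP (svalP k)) -[sval k](addKr (sval c)) -intdiv.modzDmr.
by rewrite h addNr intdiv.mod0z.
Qed.

Lemma mulE p q : mul p q = (cyc_of n (sval p.1 + sval q.1),
  gp (- sval q.1) p.2 + q.2 + Tg (Irange (sval p.1 + sval q.1) (- sval q.1)) p.2 q.2).
Proof. by []. Qed.

Lemma gpH k : good H (gp k).
Proof. exact: good_gpow. Qed.

Lemma gpHeq k a b : H (a - b) -> H (gp k a - gp k b).
Proof. by apply: good_H => //; apply: gpH. Qed.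

Lemma C_refl q : Crel q q.
Proof. by split=> //; rewrite subrr; case: Hsub. Qed.
Lemma C_sym q z : Crel q z -> Crel z q.
Proof. by case=> h1 h2; split=> //; rewrite -opprB; apply: (Hopp Hsub). Qed.
Lemma C_trans q z w : Crel q z -> Crel z w -> Crel q w.
Proof.
case=> h1 h2 [h3 h4]; split; first by rewrite h3.
by rewrite -[w.2](subrK z.2) -addrA; apply: (Hadd Hsub).
Qed.

Lemma HTg s a b s' a' b' : H (Tg s a b - Tg s' a' b').
Proof. by apply: HG0; apply: G0_sub; apply: Tg_G0. Qed.

Lemma mulC_l x y r : Crel x r -> Crel (mul x y) (mul r y).
Proof.
case: x => [x1 x2]; case: r => [r1 r2]; case=> /= h1 h2.
have e : r1 = x1 := val_inj h1. subst r1.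
rewrite !mulE /=; split=> //.
rewrite eq3; apply: (Hadd Hsub); first apply: (Hadd Hsub).
- by apply: gpHeq.
- by rewrite subrr; apply: (H0 Hsub).
- exact: HTg.
Qed.

Lemma gp_inv k x : gp k (gp (- k) x) = x.
Proof. by rewrite -{1}(opprK k) gpow_can. Qed.

Lemma mulC_l_surj x y z : Crel (mul x y) z -> exists r, Crel x r /\ mul r y = z.
Proof.
case: x => [x1 x2]; case: y => [y1 y2]; case: z => [z1 z2]; case=> /= h1 h2.
set i := sval x1 in h1 h2 *; set j := sval y1 in h1 h2 *.
set s := Irange (i + j) (- j) in h2 *.
set w := z2 - y2.
set d := Tg s (gp j w) y2.
exists (x1, gp j (w - d)); split.
- split=> //=.
  rewrite -{1}(gp_inv j x2); apply: gpHeq.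
  rewrite /w (eqA _ _ _ _ (Tg s x2 y2)); apply: (Hadd Hsub) => //; exact: HTg.
- rewrite mulE /=; congr pair.
  + by apply: val_inj; rewrite /= h1.
  + rewrite -/i -/j -/s gpow_can.
    have -> : Tg s (gp j (w - d)) y2 = d.
      apply: Tg_eql; rewrite gp_addG0; last by apply: G0_opp; apply: Tg_G0.
      by rewrite [gp j w + _]addrC addrK; apply: gp_G0; apply: G0_opp; apply: Tg_G0.
    by rewrite /w eqB.
Qed.

Lemma mulC_r y x r : Crel x r -> Crel (mul y x) (mul y r).
Proof.
case: x => [x1 x2]; case: r => [r1 r2]; case=> /= h1 h2.
have e : r1 = x1 := val_inj h1. subst r1.
rewrite !mulE /=; split=> //.
rewrite eq3; apply: (Hadd Hsub); first apply: (Hadd Hsub) => //.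
- by rewrite subrr; apply: (H0 Hsub).
- exact: HTg.
Qed.

Lemma eqA' (z y d A t : X) : z - y - d - A = (z - (y + A + t)) + (t - d).
Proof. by rewrite (eqA z y d A t) [A + y]addrC. Qed.

Lemma mulC_r_surj y x z : Crel (mul y x) z -> exists r, Crel x r /\ mul y r = z.
Proof.
case: x => [x1 x2]; case: y => [y1 y2]; case: z => [z1 z2]; case=> /= h1 h2.
set i := sval y1 in h1 h2 *; set j := sval x1 in h1 h2 *.
set s := Irange (i + j) (- j) in h2 *.
set w := z2 - gp (- j) y2.
set d := Tg s y2 w.
exists (x1, w - d); split.
- split=> //=.
  rewrite /w (eqA' _ _ _ _ (Tg s y2 x2)); apply: (Hadd Hsub) => //; exact: HTg.
- rewrite mulE /=; congr pair.
  + by apply: val_inj; rewrite /= h1.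
  + rewrite -/i -/j -/s Tg_addr (@Tg_G0r _ _ (- d)); last by apply: G0_opp; apply: Tg_G0.
    by rewrite addr0 -addrA subrK /w addrC subrK.
Qed.

Local Notation e := (sdone X n).

Lemma mul_e_r p : mul p e = p.
Proof.
case: p => [p1 p2]; rewrite mulE /= intdiv.mod0z addr0 cycK oppr0 /= addr0.
by rewrite Tg_G0r ?addr0 //; apply: G0_0.
Qed.

Lemma mul_e_l p : mul e p = p.
Proof.
case: p => [p1 p2]; rewrite mulE /= intdiv.mod0z add0r cycK gp_0 add0r.
by rewrite Tg_G0l ?addr0 //; apply: G0_0.
Qed.

Variable N : Cyc n * X -> Prop.
Hypothesis hN : forall z, N z <-> Crel e z.

Lemma coset_l p : set_eq (lcoset mul p N) (Crel p).
Proof.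
move=> z; split.
- case=> a [/hN Na ->]; rewrite -{1}(mul_e_r p); exact: mulC_r.
- move=> h; rewrite -(mul_e_r p) in h; have [r [hr <-]] := mulC_r_surj h.
  by exists r; split=> //; apply/hN.
Qed.

Lemma coset_r p : set_eq (rcoset mul N p) (Crel p).
Proof.
move=> z; split.
- case=> a [/hN Na ->]; rewrite -{1}(mul_e_l p); exact: mulC_l.
- move=> h; rewrite -(mul_e_l p) in h; have [r [hr <-]] := mulC_l_surj h.
  by exists r; split=> //; apply/hN.
Qed.

Lemma coset_rr x y : set_eq (rrcoset mul N x y) (Crel (mul x y)).
Proof.
move=> z; split.
- case=> a [/hN Na ->]; apply: mulC_l; rewrite -{1}(mul_e_l x); exact: mulC_l.
- move=> h; have [r [hr <-]] := mulC_l_surj h.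
  rewrite -(mul_e_l x) in hr; have [a [ha <-]] := mulC_l_surj hr.
  by exists a; split=> //; apply/hN.
Qed.

Lemma coset_ll y x : set_eq (llcoset mul y x N) (Crel (mul y x)).
Proof.
move=> z; split.
- case=> a [/hN Na ->]; apply: mulC_r; rewrite -{1}(mul_e_r x); exact: mulC_r.
- move=> h; have [r [hr <-]] := mulC_r_surj h.
  rewrite -(mul_e_r x) in hr; have [a [ha <-]] := mulC_r_surj hr.
  by exists a; split=> //; apply/hN.
Qed.

Lemma set_eq_trans (A B C : Cyc n * X -> Prop) : set_eq A B -> set_eq B C -> set_eq A C.
Proof. by move=> h1 h2 z; split=> h; [apply/h2/h1|apply/h1/h2]. Qed.
Lemma set_eq_sym (A B : Cyc n * X -> Prop) : set_eq A B -> set_eq B A.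
Proof. by move=> h z; split=> h'; apply/h. Qed.

Lemma N_normal : normal_subloop mul e N.
Proof.
split.
- split.
  + by apply/hN; apply: C_refl.
  + move=> a b /hN ha /hN hb; apply/hN.
    apply: (C_trans hb); rewrite -{1}(mul_e_l b); exact: mulC_l.
  + move=> a b x /hN ha /hN hb hx; apply/hN.
    have h1 : Crel x (mul a x) by rewrite -{1}(mul_e_l x); exact: mulC_l.
    rewrite hx in h1; exact: (C_trans hb (C_sym h1)).
  + move=> a b x /hN ha /hN hb hx; apply/hN.
    have h1 : Crel x (mul x a) by rewrite -{1}(mul_e_r x); exact: mulC_r.
    rewrite hx in h1; exact: (C_trans hb (C_sym h1)).
- move=> x y; split.
  + exact: (set_eq_trans (coset_l x) (set_eq_sym (coset_r x))).
  + exact: (set_eq_trans (coset_rr x y) (set_eq_sym (coset_r (mul x y)))).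
  + exact: (set_eq_trans (coset_ll y x) (set_eq_sym (coset_l (mul y x)))).
Qed.

Lemma quot_eq p q : Crel p q -> set_eq (lcoset mul p N) (lcoset mul q N).
Proof.
move=> h z; split=> /coset_l h'; apply/coset_l.
- exact: (C_trans (C_sym h) h').
- exact: (C_trans h h').
Qed.

Definition eqv (a b : X) := H (a - b).
Lemma eqv_refl a : eqv a a. Proof. by rewrite /eqv subrr; apply: (H0 Hsub). Qed.
Lemma eqv_sym a b : eqv a b -> eqv b a.
Proof. by rewrite /eqv => h; rewrite -opprB; apply: (Hopp Hsub). Qed.
Lemma eqv_trans a b c : eqv a b -> eqv b c -> eqv a c.
Proof. by rewrite /eqv => h1 h2; rewrite -[a](subrK b) -addrA; apply: (Hadd Hsub). Qed.
Lemma eqv_add a b a' b' : eqv a a' -> eqv b b' -> eqv (a + b) (a' + b').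
Proof.
rewrite /eqv => h1 h2; rewrite opprD addrACA; exact: (Hadd Hsub).
Qed.
Lemma eqv_G0r a c : G0 c -> eqv (a + c) a.
Proof. by move=> h; rewrite /eqv addrAC subrr add0r; apply: HG0. Qed.
Lemma eqv_gpD k u v : eqv (gp k (u + v)) (gp k u + gp k v).
Proof. by rewrite /eqv opprD addrA; apply: HG0; apply: gp_D. Qed.

Lemma assoc_mod : ((0 < n)%N -> forall x, iter n g x = x) ->
  forall p q r, Crel (mul p (mul q r)) (mul (mul p q) r).
Proof.
move=> hn [p1 x] [q1 y] [r1 z]; rewrite !mulE /=; split.
  by rewrite /= intdiv.modzDml intdiv.modzDmr addrA.
rewrite -/(eqv _ _).
set i := sval p1; set j := sval q1; set k := sval r1.
set P := gp (- intdiv.modz (j + k) n) x.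
apply: (@eqv_trans _ (P + gp (- k) y + z)).
- apply: (eqv_trans (eqv_G0r _ (Tg_G0 _ _ _))).
  apply: eqv_add; last exact: eqv_refl.
  rewrite gp_addG0; last exact: Tg_G0.
  apply: (eqv_trans (eqv_G0r _ (gp_G0 _ (Tg_G0 _ _ _)))).
  apply: (eqv_trans (eqv_gpD _ _ _)).
  rewrite /P (gpow_mod hn); exact: eqv_refl.
- apply: eqv_sym.
  apply: (eqv_trans (eqv_G0r _ (Tg_G0 _ _ _))).
  rewrite -[P + gp (- k) y + z]addrA; apply: eqv_add; first exact: eqv_refl.
  apply: (eqv_trans (eqv_G0r _ (Tg_G0 _ _ _))); exact: eqv_refl.
Qed.

Hypothesis H1g : forall x, H (x - g x).

Lemma eqv_gp k x : eqv (gp k x) x.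
Proof.
have hg : forall m y, eqv (iter m g y) y.
  elim=> [|m IH] y; first exact: eqv_refl.
  rewrite iterS; apply: (eqv_trans _ (IH y)); apply: eqv_sym; exact: H1g.
have hgi : forall m y, eqv (iter m ginv y) y.
  elim=> [|m IH] y; first exact: eqv_refl.
  rewrite iterS; apply: (eqv_trans _ (IH y)).
  by rewrite /eqv -{2}(ginv_g (iter m ginv y)); apply: H1g.
by case: k => m; [apply: hg|apply: hgi].
Qed.

Lemma comm_mod p q : Crel (mul q p) (mul p q).
Proof.
move: p q => [p1 x] [q1 y]; rewrite !mulE /=; split; first by rewrite addrC.
rewrite -/(eqv _ _).
apply: (eqv_trans (eqv_G0r _ (Tg_G0 _ _ _))).
apply: eqv_sym; apply: (eqv_trans (eqv_G0r _ (Tg_G0 _ _ _))).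
rewrite [gp _ y + _]addrC; apply: eqv_add; [apply: eqv_sym|]; exact: eqv_gp.
Qed.

End Loop.

Lemma modz1_gen (k : nat) : k != 1%N -> intdiv.modz 1 k = 1.
Proof. by case: k => [|[|m]]. Qed.

Section Minimal.
Variable n : nat.
Local Notation mul := (sdmul g ginv gam (n:=n)).
Local Notation e := (sdone X n).
Local Notation c0 := (cyc_of n 0).
Local Notation gp := (gpow g ginv).

Lemma sv0 : sval c0 = 0. Proof. by rewrite /= intdiv.mod0z. Qed.

Lemma mul00 a b : mul (c0, a) (c0, b) = (c0, a + b).
Proof. by rewrite mulE sv0 addr0 oppr0 /Tg /= big_nil addr0. Qed.

Variable M : Cyc n * X -> Prop.
Hypothesis hM : normal_subloop mul e M.
Definition Sl z := M (c0, z).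

Lemma Me : M e. Proof. by case: hM => [[]]. Qed.

Lemma S_sub : add_subgroup Sl.
Proof.
case: hM => [[he hmul hdl hdr] _]; split.
- exact: he.
- by move=> a b ha hb; rewrite /Sl -mul00; apply: hmul.
- move=> a ha; apply: (hdl _ _ _ ha he).
  by rewrite mul00 subrr.
Qed.

Lemma extract s v u : (exists m, M m /\ (s, u) = mul (s, v) m) ->
  Sl (u - v - Tg (Irange (sval s) 0) v u).
Proof.
case=> [[m1 w] [hm E]].
rewrite mulE /= in E; case: E => E1 E2.
have hm1 : sval m1 = 0.
  by apply: (cyc_add0 (c := s)); rewrite -E1.
have em1 : m1 = c0 by apply: cyc_inj; rewrite hm1 sv0.
rewrite em1 in hm.
rewrite hm1 addr0 oppr0 /= in E2.
have -> : u - v - Tg (Irange (sval s) 0) v u = w.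
  rewrite E2 Tg_addr Tg_addr Tg_alt add0r (@Tg_G0r _ _ (Tg _ v w)); last exact: Tg_G0.
  by rewrite addr0 addrAC addrK [v + w]addrC addrK.
by [].
Qed.

Lemma self_in p : lcoset mul p M p.
Proof. by exists e; split; [apply: Me|rewrite mul_e_r]. Qed.


Hypothesis n1 : n != 1%N.
Local Notation c1 := (cyc_of n 1).
Lemma sv1 : sval c1 = 1.
Proof. by rewrite /=; apply: modz1_gen. Qed.

Lemma I1 : Irange (1 : int) (-1) = [:: -1; 0]. Proof. by []. Qed.
Lemma I2 : Irange (1 : int) 0 = [:: 0]. Proof. by []. Qed.
Lemma TgI1 x y : Tg (Irange 1 (-1)) x y = g (gam x y) + gam x y.
Proof. by rewrite /Tg I1 big_cons big_cons big_nil addr0. Qed.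
Lemma TgI2 x y : Tg (Irange 1 0) x y = gam x y.
Proof. by rewrite /Tg I2 big_cons big_nil addr0. Qed.

Lemma minA : quot_associative mul M -> forall c b, Sl (gam c b).
Proof.
move=> hA c b.
set a := ginv (ginv c).
have E1 : mul (mul (c0, g a) (c0, g b)) (c1, 0) = (c1, ginv (g a + g b)).
  rewrite mul00 mulE sv1 sv0 add0r Tg_G0r; last exact: G0_0.
  by rewrite addr0 addr0.
have E2 : mul (c0, g a) (mul (c0, g b) (c1, 0))
          = (c1, a + b + (gam a b + ginv (gam a b))).
  have E3 : mul (c0, g b) (c1, 0) = (c1, b).
    rewrite mulE sv1 sv0 add0r Tg_G0r; last exact: G0_0.
    by rewrite addr0 addr0 /= g_ginv.
  rewrite E3 mulE sv1 sv0 add0r TgI1 /= g_ginv -C3 ginv_g.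
  by rewrite [gam a b + _]addrC.
have := hA (c0, g a) (c0, g b) (c1, 0) (mul (mul (c0, g a) (c0, g b)) (c1, 0)).
case=> /(_ (self_in _)); rewrite E1 E2 => hex _.
have := extract hex; rewrite sv1 TgI2.
set u := ginv (g a + g b); set v := a + b + _.
have huv : u - v = ginv (ginv (gam a b)).
  by rewrite /u C1 /v !addrA [_ + ginv (ginv _)]addrC addrK.
have -> : gam v u = 0.
  rewrite -[u](subrK v) gam_addr gam_alt addr0 huv C3 C3.
  by apply: G0_rad; apply: G0_gam.
by rewrite subr0 huv C3 C3 /a !ginv_g.
Qed.


Lemma gamC2r a b c : gam a (gam b c) = 0.
Proof. by rewrite gam_sym C2. Qed.

Lemma minC : quot_commutative mul M -> (forall a b, Sl (gam a b)) /\ (forall z, Sl (z - g z)).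
Proof.
move=> hC.
have hW : forall x y, Sl (ginv x - x - gam x (ginv x) - gam x y).
  move=> x y.
  have E1 : mul (c0, x) (c1, y) = (c1, ginv x + y + (g (gam x y) + gam x y)).
    by rewrite mulE sv1 sv0 add0r TgI1.
  have E2 : mul (c1, y) (c0, x) = (c1, y + x + gam y x).
    by rewrite mulE sv1 sv0 addr0 oppr0 TgI2 /=.
  have := hC (c0, x) (c1, y) (mul (c0, x) (c1, y)).
  case=> /(_ (self_in _)); rewrite E1 E2 => hex _.
  have := extract hex; rewrite sv1 TgI2.
  set u := ginv x + y + _; set v := y + x + _.
  have hg : gam v u = gam (ginv x) y + gam x (ginv x) + gam x y.
    rewrite /u /v g_gam !gam_addl !gam_addr !C2 !gamC2r gam_alt ?addr0 ?add0r.
    rewrite (gam_sym y (ginv x)).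
    set P := gam (ginv x) y; set R := gam x (ginv x); set Q := gam x y.
    by zprep; canc P; canc R; canc Q.
  rewrite hg /u /v g_gam (gam_sym y x).
  set P := gam (ginv x) y; set R := gam x (ginv x); set Q := gam x y.
  have -> : ginv x + y + (P + Q) - (y + x + Q) - (P + R + Q) = ginv x - x - R - Q.
    by zprep; canc (ginv x); canc y; canc x; canc P; canc Q; canc Q; canc R.
  by [].
have sub := S_sub.
have hG : forall a b, Sl (gam a b).
  move=> a b; have h := sub_B sub (hW a 0) (hW a b); move: h.
  rewrite gam0r subr0.
  set R := gam a (ginv a); set Q := gam a b.
  have -> : ginv a - a - R - (ginv a - a - R - Q) = Q.
    by zprep; canc (ginv a); canc a; canc R; canc Q.
  by [].
split=> // z.
have h := hW (g z) 0; rewrite gam0r subr0 g_ginv in h.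
have h2 := hG (g z) z.
case: sub => _ hadd _.
have := hadd _ _ h h2.
by rewrite subrK.
Qed.

End Minimal.

Lemma stab_gen (S : X -> Prop) (f : X -> X) : good G0 f ->
  (forall c, G0 c -> gen_subgroup S c) ->
  (forall s, S s -> gen_subgroup S (f s)) ->
  forall c, gen_subgroup S c -> gen_subgroup S (f c).
Proof.
case=> f1 f2 f3 f4 f5 hG hS; apply: gen_min => //.
have sub := gen_sub S.
split.
- by rewrite f5; case: sub.
- move=> a b ha hb.
  rewrite (decomp3 (f (a + b)) (f a) (f b)).
  case: sub => _ hadd _.
  by apply: (hadd); [apply: (hadd)|apply: hG; apply: f4].
- move=> a ha.
  have h4 := f4 a (- a); rewrite subrr f5 sub0r in h4.
  have -> : f (- a) = - f a - (- f a - f (- a)).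
    set p := f a; set q := f (- a).
    by zprep; canc p; canc q.
  case: sub => _ hadd hopp.
  by apply: (hadd); [apply: (hopp)|apply: (hopp); apply: hG].
Qed.

Lemma iter_dvd (m k : nat) : (forall x, iter m g x = x) -> (m %| k)%N -> forall x, iter k g x = x.
Proof.
move=> hm /dvdnP [q ->] x.
elim: q => [|q IH] //=; by rewrite mulSn ssrnat.iterD IH hm.
Qed.

Lemma stab_1mg f : good G0 f -> forall x, exists d, G0 d /\ f (x - g x) = (f x - f (g x)) + d.
Proof.
case=> f1 f2 f3 f4 f5 x.
exists ((f (x - g x) - f x - f (- g x)) - (- f (g x) - f (- g x))); split.
- apply: G0_sub; first exact: f4.
  by have := f4 (g x) (- g x); rewrite subrr f5 sub0r.
- set p := f (x - g x); set q := f x; set r := f (- g x); set t := f (g x).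
  by zprep; canc p; canc q; canc r; canc t.
Qed.

Lemma main_sec (n : nat) (Hn : (0 < n)%N -> order_divides g n /\ r_divides g gam n) :
  let mul := sdmul g ginv gam (n := n) in
  let e := sdone X n in
  let A := one_times (n := n) (Img_gam gam) in
  let D := one_times (n := n) (fun z => Img_gam gam z \/ Img_1mg g z) in
  [/\ is_associator_subloop mul e A,
      set_sub A D,
      is_commutator_subloop mul e D &
      is_derived_subloop mul e D].
Proof.
move=> mul e A D.
pose SD := (fun z => Img_gam gam z \/ Img_1mg g z).
pose HD := gen_subgroup SD.
have hiter : (0 < n)%N -> forall x, iter n g x = x.
  move=> np; case: (Hn np) => [[m [_ hm _ hdvd]] _]; exact: iter_dvd hm hdvd.
have G0HD : forall c, G0 c -> HD c.
  apply: gen_min; first exact: gen_sub.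
  by move=> s hs; apply: gen_in; left.
have HDsub : add_subgroup HD by apply: gen_sub.
have HDg : forall c, HD c -> HD (g c).
  apply: stab_gen => //; first exact: (good_g G0_g).
  move=> s [[x [y ->]]|[x ->]].
  - by rewrite g_gam; apply: gen_in; left; exists (ginv x), y.
  - have [d [Gd ->]] := stab_1mg (good_g G0_g) x.
    case: HDsub => _ hadd _; apply: (hadd); last exact: G0HD.
    by apply: gen_in; right; exists (g x).
have HDginv : forall c, HD c -> HD (ginv c).
  apply: stab_gen => //; first exact: (good_ginv G0_ginv).
  move=> s [[x [y ->]]|[x ->]].
  - by rewrite C3; apply: gen_in; left; exists (g x), y.
  - have [d [Gd ->]] := stab_1mg (good_ginv G0_ginv) x.
    case: HDsub => _ hadd _; apply: (hadd); last exact: G0HD.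
    by rewrite g_ginv; apply: gen_in; right; exists (ginv x); rewrite ginv_g.
have H1g : forall x, HD (x - g x) by move=> x; apply: gen_in; right; exists x.
have n1f : n = 1%N -> (forall x, g x = x) /\ (forall a b, gam a b = 0).
  move=> n1; have np : (0 < n)%N by rewrite n1.
  case: (Hn np) => [[m [mp hm _ hdvd]] [r [rp hr _ rdvd]]].
  rewrite n1 dvdn1 in hdvd; rewrite n1 dvdn1 in rdvd.
  move/eqP: hdvd => hm1; move/eqP: rdvd => hr1; subst m r.
  split; first by move=> x; apply: (hm x).
  by move=> a b; have := hr a b; rewrite big_ord1.
have hNA : forall z, A z <-> Crel G0 e z.
  by move=> z; rewrite /Crel /= intdiv.mod0z subr0.
have hND : forall z, D z <-> Crel HD e z.
  by move=> z; rewrite /Crel /= intdiv.mod0z subr0.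
have z_c0 : forall z : Cyc n * X, sval z.1 = 0 -> z = (cyc_of n 0, z.2).
  by case=> z1 z2 /= h; congr pair; apply: cyc_inj; rewrite h sv0.
have G0id : forall c, G0 c -> G0 c by [].
have nA : normal_subloop mul e A.
  exact: (N_normal G0sub G0id G0_g G0_ginv hNA).
have nD : normal_subloop mul e D.
  exact: (N_normal HDsub G0HD HDg HDginv hND).
have assocA : quot_associative mul A.
  move=> x y z; apply: set_eq_sym; apply: (quot_eq G0sub G0id hNA).
  exact: (assoc_mod G0sub G0id hiter).
have assocD : quot_associative mul D.
  move=> x y z; apply: set_eq_sym; apply: (quot_eq HDsub G0HD hND).
  exact: (assoc_mod HDsub G0HD hiter).
have commD : quot_commutative mul D.
  move=> x y; apply: (quot_eq HDsub G0HD hND).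
  exact: (comm_mod HDsub G0HD H1g y x).
have gens : forall M, normal_subloop mul e M ->
    (forall a b, Sl M (gam a b)) -> (forall x, Sl M (x - g x)) -> set_sub D M.
  move=> M hM hG h1 z [hz1 hz2]; rewrite (z_c0 z hz1).
  move: hz2; apply: (gen_min (H := Sl M)); first exact: (S_sub hM).
  by move=> s [[a [b ->]]|[x ->]].
have minCD : forall M, normal_subloop mul e M -> quot_commutative mul M -> set_sub D M.
  move=> M hM hC; case: (eqVneq n 1%N) => [n1|n1].
  - have [hg hgam] := n1f n1.
    apply: gens => // [a b|x]; rewrite ?hgam ?hg ?subrr /Sl; exact: (Me hM).
  - have [hG h1] := minC hM n1 hC.
    exact: gens.
split.
- split=> // M hM hAM z [hz1 hz2]; rewrite (z_c0 z hz1).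
  move: hz2; apply: (gen_min (H := Sl M)); first exact: (S_sub hM).
  move=> s [a [b ->]].
  case: (eqVneq n 1%N) => [n1|n1].
  + have [_ hgam] := n1f n1; rewrite hgam /Sl; exact: (Me hM).
  + exact: (minA hM n1 hAM).
- move=> z [hz1 hz2]; split=> //.
  move: hz2; apply: gen_min; first exact: gen_sub.
  by move=> s hs; apply: gen_in; left.
- by split.
- split; first exact: nD.
  + by rewrite /quot_abelian_group; split.
  + by move=> M hM [_ hC]; apply: minCD.
Qed.
End Basic.

Unset Implicit Arguments. Set Strict Implicit.

Theorem mainTheorem6 (X : zmodType) (g ginv : X -> X) (gam : X -> X -> X) (n : nat)
  (g_ginv : cancel g ginv) (ginv_g : cancel ginv g)
  (gam_sym : forall x y, gam x y = gam y x)
  (gam_alt : forall x, gam x x = 0)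
  (gam_addl : forall x y z, gam (x + y) z = gam x z + gam y z)
  (gam_addr : forall x y z, gam x (y + z) = gam x y + gam x z)
  (C1 : forall x y, ginv (g x + g y)
          = x + y + gam x y + ginv (gam x y) + ginv (ginv (gam x y)))
  (C2 : forall x y z, gam (gam x y) z = 0)
  (C3 : forall x y, ginv (gam x y) = gam (g x) y)
  (Hn : (0 < n)%N -> order_divides g n /\ r_divides g gam n) :
  let mul := sdmul g ginv gam (n := n) in
  let e := sdone X n in
  let A := one_times (n := n) (Img_gam gam) in
  let D := one_times (n := n) (fun z => Img_gam gam z \/ Img_1mg g z) in
  [/\ is_associator_subloop mul e A,
      set_sub A D,
      is_commutator_subloop mul e D &
      is_derived_subloop mul e D].
Proof.
move=> mul e A D.
exact: (main_sec g_ginv ginv_g gam_sym gam_alt gam_addl gam_addr C1 C2 C3 Hn).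
Qed.
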